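(* Let $\mathbb{V}$ be a BIT speciale variety with signature $\mathcal{F}$, BIT speciale terms $0$, $\alpha_1,\dots,\alpha_n$, $\theta$ (as in the context). In every term below, the variables $y$ (with or without indices) are the ideal variables and the variables $x$ (with or without indices) are the parameters; all listed terms are ideal terms in their $y$-variables. For an operation symbol $\tau$ of arity $k$ and $1\le i\le n$, write $$T_{\tau,i}:=\alpha_i\big(\tau(\theta(y_{11},\dots,y_{1n},x_1),\theta(y_{21},\dots,y_{2n},x_2),\dots,\theta(y_{k1},\dots,y_{kn},x_k)),\ \tau(x_1,\dots,x_k)\big),$$ and, for $1\le j\le k$, $$S_{\tau,i,j}:=\alpha_i\big(\tau(x_1,\dots,x_{j-1},\theta(y_1,\dots,y_n,x_j),x_{j+1},\dots,x_k),\ \tau(x_1,\dots,x_k)\big),$$ and let $R_i:=\alpha_i(\theta(y_1,\dots,y_n,x),\theta(y_{n+1},\dots,y_{2n},x))$. Then each of the following sets of terms determines ideals in $\mathbb{V}$: (i) the terms $\theta(y_1,\dots,y_n,y_{n+1})$ and $\alpha_i(y_1,y_2)$ ($1\le i\le n$), together with $T_{\tau,i}$ for all $\tau\in\mathcal{F}\cup\{\theta\}$ and all $1\le i\le n$; (ii) the terms $0$, $\theta(y_1,\dots,y_n,y_{n+1})$ and $\alpha_i(y,0)$ ($1\le i\le n$), together with $T_{\tau,i}$ for all $\tau\in\mathcal{F}\cup\{\theta\}\cup\{\alpha_j\mid 1\le j\le n\}$ and all $1\le i\le n$; (iii) the terms $\theta(y_1,\dots,y_n,y_{n+1})$, $\alpha_i(y,0)$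 and $R_i$ ($1\le i\le n$), together with $T_{\tau,i}$ for all $\tau\in\mathcal{F}$ and all $1\le i\le n$; (iv) the terms $R_i$, $\theta(y_1,\dots,y_n,y_{n+1})$ and $\alpha_i(y,0)$ ($1\le i\le n$), together with $S_{\tau,i,j}$ for all $\tau\in\mathcal{F}$ (of arity $k$) and all $i,j$ with $1\le i\le n$, $1\le j\le k$. Moreover, if $\mathbb{V}$ is semi-abelian, then in (i) the terms $\theta(y_1,\dots,y_{n+1}),\alpha_i(y_1,y_2)$, in (ii) the terms $0,\theta(y_1,\dots,y_{n+1}),\alpha_i(y,0)$, in (iii) the terms $\theta(y_1,\dots,y_{n+1}),\alpha_i(y,0)$, and in (iv) the terms $\theta(y_1,\dots,y_{n+1}),\alpha_i(y,0)$ can be replaced by the terms $\tau(y_1,\dots,y_k)$ for all operation symbols $\tau\in\mathcal{F}$ (including the constant $0$), $k$ being the arity of $\tau$, and the resulting sets still determine ideals in $\mathbb{V}$.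
   Context: Let $\mathbb{V}$ be a variety of universal algebras with signature $\mathcal{F}$ (a set of finitary operation symbols; constants are 0-ary). $\mathbb{V}$ is called BIT speciale if its algebraic theory contains a constant $0$ and, for some natural number $n\ge1$, binary terms $\alpha_1,\dots,\alpha_n$ and an $(n+1)$-ary term $\theta$ such that the identities $\alpha_i(x,x)=0$ ($1\le i\le n$) and $\theta(\alpha_1(x,y),\dots,\alpha_n(x,y),y)=x$ hold in $\mathbb{V}$. A semi-abelian variety is (equivalently, by Bourn–Janelidze) a BIT speciale variety in which $0$ is the only constant of its algebraic theory. A term $t(x_1,\dots,x_m,y_1,\dots,y_p)$ over $\mathcal{F}$ is an ideal term in the variables $y_1,\dots,y_p$ if $t(x_1,\dots,x_m,0,\dots,0)=0$ is an identity of $\mathbb{V}$. A non-empty subset $H$ of a $\mathbb{V}$-algebra $A$ is an ideal if for every ideal term $t(x_1,\dots,x_m,y_1,\dots,y_p)$ in the variables $y_1,\dots,y_p$, all $a_1,\dots,a_m\in A$ and all $b_1,\dots,b_p\in H$, one has $t(a_1,\dots,a_m,b_1,\dots,b_p)\in H$. A set $T$ of ideal terms determines ideals in $\mathbb{V}$ if for every $\mathbb{V}$-algebra $A$, a non-empty subset $H\subseteq A$ is an ideal if and only if for every $t\in T$, every assignment of elements of $A$ to its $x$-variables and of elements of $H$ to its $y$-variables yields a value in $H$. *)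

(* Defs.v *)
From mathcomp Require Import all_boot.
Set Implicit Arguments. Unset Strict Implicit. Unset Printing Implicit Defensive.

Record signature := Signature { op :> Type; arity : op -> nat }.

Section UA.
Variable S : signature.

Inductive term (X : Type) : Type :=
| Var : X -> term X
| App : forall f : S, ('I_(arity f) -> term X) -> term X.
Arguments Var {X}.
Arguments App {X}.

Record algebra := Algebra {
  carrier :> Type;
  interp : forall f : S, ('I_(arity f) -> carrier) -> carrier }.

Fixpoint eval (A : algebra) (X : Type) (e : X -> A) (t : term X) : A :=
  match t with
  | Var x => e x
  | App f args => @interp A f (fun i => eval e (args i))
  end.

Fixpoint subst (X Y : Type) (s : X -> term Y) (t : term X) : term Y :=
  match t with
  | Var x => s x
  | App f args => App f (fun i => subst s (args i))
  end.

Definition opterm (f : S) : term 'I_(arity f) := App f (fun i => Var i).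

(** A variety is given by a set of identities E (pairs of terms in
    variables nat); its algebras are the models of E. *)
Definition identities := term nat -> term nat -> Prop.

Definition in_variety (E : identities) (A : algebra) : Prop :=
  forall s t, E s t -> forall e : nat -> A, eval e s = eval e t.

Definition holds (E : identities) (X : Type) (s t : term X) : Prop :=
  forall A : algebra, in_variety E A -> forall e : X -> A, eval e s = eval e t.

Definition cst (X : Type) (c : term void) : term X :=
  subst (fun v : void => match v with end) c.

Definition bin (X : Type) (t : term 'I_2) (a b : term X) : term X :=
  subst (fun i : 'I_2 => if val i == 0 then a else b) t.

Definition app_last (n : nat) (X : Type) (th : term 'I_n.+1)
    (ys : 'I_n -> term X) (z : term X) : term X :=
  subst (fun j : 'I_n.+1 => match unlift ord_max j with
                            | Some j' => ys j'
                            | None => z end) th.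

Definition BIT_speciale (E : identities) (n : nat) (zero : term void)
    (alpha : 'I_n -> term 'I_2) (theta : term 'I_n.+1) : Prop :=
  0 < n /\
  (forall i, holds E (bin (alpha i) (Var 0) (Var 0)) (cst nat zero)) /\
  holds E (app_last theta (fun i => bin (alpha i) (Var 0) (Var 1)) (Var 1))
          (Var 0).

(** Semi-abelian: BIT speciale and 0 is the only constant of the theory. *)
Definition semi_abelian (E : identities) (n : nat) (zero : term void)
    (alpha : 'I_n -> term 'I_2) (theta : term 'I_n.+1) : Prop :=
  BIT_speciale E zero alpha theta /\
  forall c : term void, holds E c zero.

(** Terms with variables [inl j] (parameters x_j) and [inr j] (ideal
    variables y_j). *)
Definition iterm := term (nat + nat).
Definition xv (j : nat) : iterm := Var (inl j).
Definition yv (j : nat) : iterm := Var (inr j).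

Definition assign (A : algebra) (ex ey : nat -> A) (v : nat + nat) : A :=
  match v with inl j => ex j | inr j => ey j end.

Definition ideal_term (E : identities) (zero : term void) (t : iterm) : Prop :=
  holds E (subst (fun v => match v with
                           | inl j => Var j
                           | inr _ => cst nat zero end) t)
          (cst nat zero).

Definition closed_under (A : algebra) (H : A -> Prop) (t : iterm) : Prop :=
  forall ex ey : nat -> A, (forall j, H (ey j)) -> H (eval (assign ex ey) t).

Definition ideal (E : identities) (zero : term void) (A : algebra)
    (H : A -> Prop) : Prop :=
  (exists a, H a) /\ forall t, ideal_term E zero t -> closed_under H t.

Definition determines_ideals (E : identities) (zero : term void)
    (T : iterm -> Prop) : Prop :=
  (forall t, T t -> ideal_term E zero t) /\
  forall A : algebra, in_variety E A -> forall H : A -> Prop, (exists a, H a) ->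
    (ideal E zero H <-> forall t, T t -> closed_under H t).

Section Terms.
Variables (n : nat) (zero : term void) (alpha : 'I_n -> term 'I_2)
          (theta : term 'I_n.+1).

(* T_{tau,i}; y_{j l} is encoded as y_(j*n+l). *)
Definition Tt (k : nat) (tau : term 'I_k) (i : 'I_n) : iterm :=
  bin (alpha i)
      (subst (fun j : 'I_k =>
                app_last theta (fun l : 'I_n => yv (val j * n + val l)) (xv j)) tau)
      (subst (fun j : 'I_k => xv j) tau).

Definition St (k : nat) (tau : term 'I_k) (i : 'I_n) (j : 'I_k) : iterm :=
  bin (alpha i)
      (subst (fun m : 'I_k =>
                if m == j then app_last theta (fun l : 'I_n => yv l) (xv m)
                else xv m) tau)
      (subst (fun m : 'I_k => xv m) tau).

Definition Rt (i : 'I_n) : iterm :=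
  bin (alpha i) (app_last theta (fun l : 'I_n => yv l) (xv 0))
                (app_last theta (fun l : 'I_n => yv (n + l)) (xv 0)).

Definition theta_y : iterm := app_last theta (fun l : 'I_n => yv l) (yv n).
Definition alpha_yy (i : 'I_n) : iterm := bin (alpha i) (yv 0) (yv 1).
Definition alpha_y0 (i : 'I_n) : iterm := bin (alpha i) (yv 0) (cst _ zero).
Definition zero_t : iterm := cst _ zero.
Definition op_y (f : S) : iterm := subst (fun j : 'I_(arity f) => yv j) (opterm f).

Definition ops_i (t : iterm) : Prop :=
  (exists (f : S) i, t = Tt (opterm f) i) \/ (exists i, t = Tt theta i).
Definition ops_ii (t : iterm) : Prop :=
  (exists (f : S) i, t = Tt (opterm f) i) \/ (exists i, t = Tt theta i) \/
  (exists i j, t = Tt (alpha j) i).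
Definition ops_iii (t : iterm) : Prop :=
  (exists (f : S) i, t = Tt (opterm f) i) \/ (exists i, t = Rt i).
Definition ops_iv (t : iterm) : Prop :=
  (exists (f : S) i j, t = St (opterm f) i j) \/ (exists i, t = Rt i).

Definition base_i (t : iterm) : Prop :=
  t = theta_y \/ exists i, t = alpha_yy i.
Definition base_ii (t : iterm) : Prop :=
  t = zero_t \/ t = theta_y \/ exists i, t = alpha_y0 i.
Definition base_iii (t : iterm) : Prop :=
  t = theta_y \/ exists i, t = alpha_y0 i.
Definition base_iv (t : iterm) : Prop :=
  t = theta_y \/ exists i, t = alpha_y0 i.
Definition base_sa (t : iterm) : Prop := exists f : S, t = op_y f.

Definition Tset_i : iterm -> Prop := fun t => base_i t \/ ops_i t.
Definition Tset_ii : iterm -> Prop := fun t => base_ii t \/ ops_ii t.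
Definition Tset_iii : iterm -> Prop := fun t => base_iii t \/ ops_iii t.
Definition Tset_iv : iterm -> Prop := fun t => base_iv t \/ ops_iv t.
Definition Tset_i_sa : iterm -> Prop := fun t => base_sa t \/ ops_i t.
Definition Tset_ii_sa : iterm -> Prop := fun t => base_sa t \/ ops_ii t.
Definition Tset_iii_sa : iterm -> Prop := fun t => base_sa t \/ ops_iii t.
Definition Tset_iv_sa : iterm -> Prop := fun t => base_sa t \/ ops_iv t.
End Terms.

End UA.
Arguments Var {S X}.
Arguments App {S X}.

(* Main.v *)
Require Import Defs.
From mathcomp Require Import all_boot.
From Stdlib Require Import FunctionalExtensionality.
Set Implicit Arguments. Unset Strict Implicit. Unset Printing Implicit Defensive.

Section Proof.
Variable S : signature.

Lemma eval_subst (A : algebra S) X Y (e : Y -> A) (s : X -> term S Y) (t : term S X) :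
  eval e (subst s t) = eval (fun x => eval e (s x)) t.
Proof.
elim: t => [x|f args IH] //=.
f_equal; apply: functional_extensionality => i; exact: IH.
Qed.

Lemma eval_cst (A : algebra S) X (e : X -> A) (c : term S void) :
  eval e (cst X c) = eval (fun v : void => match v with end) c.
Proof. rewrite /cst eval_subst; f_equal; apply: functional_extensionality; case. Qed.

Variables (E : identities S) (n : nat) (zero : term S void)
  (alpha : 'I_n -> term S 'I_2) (theta : term S 'I_n.+1).
Hypothesis HB : BIT_speciale E zero alpha theta.

Definition z0 (A : algebra S) : A := eval (fun v : void => match v with end) zero.
Definition al (A : algebra S) (i : 'I_n) (a b : A) : A :=
  eval (fun j : 'I_2 => if val j == 0 then a else b) (alpha i).
Definition th (A : algebra S) (h : 'I_n -> A) (z : A) : A :=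
  eval (fun j : 'I_n.+1 => match unlift ord_max j with Some j' => h j' | None => z end) theta.

Lemma eval_al (A : algebra S) X (e : X -> A) i a b :
  eval e (bin (alpha i) a b) = al i (eval e a) (eval e b).
Proof.
rewrite /bin eval_subst /al; f_equal; apply: functional_extensionality => j.
by case: (val j == 0).
Qed.

Lemma eval_th (A : algebra S) X (e : X -> A) ys z :
  eval e (app_last theta ys z) = th (fun j => eval e (ys j)) (eval e z).
Proof.
rewrite /app_last eval_subst /th; f_equal; apply: functional_extensionality => j.
by case: (unlift ord_max j).
Qed.

Lemma eval_z0 (A : algebra S) X (e : X -> A) : eval e (cst X zero) = z0 A.
Proof. exact: eval_cst. Qed.

Section Alg.
Variable A : algebra S.
Hypothesis HA : in_variety E A.

Lemma al_xx i (a : A) : al i a a = z0 A.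
Proof.
case: HB => _ [H1 _].
have := H1 i A HA (fun _ => a).
by rewrite eval_al eval_z0.
Qed.

Lemma th_al (a b : A) : th (fun i => al i a b) b = a.
Proof.
case: HB => _ [_ H2].
have := H2 A HA (fun k => if k == 0 then a else b).
rewrite eval_th.
have -> : (fun j => eval (fun k => if k == 0 then a else b) (bin (alpha j) (Var 0) (Var 1)))
   = (fun j => al j a b).
  by apply: functional_extensionality => j; rewrite eval_al.
by [].
Qed.

Lemma th0 (h : 'I_n -> A) z : (forall l, h l = z0 A) -> th h z = z.
Proof.
move=> Hh.
have -> : h = fun i => al i z z.
  by apply: functional_extensionality => i; rewrite al_xx.
exact: th_al.
Qed.
End Alg.

Lemma ideal_termP t :
  (forall A : algebra S, in_variety E A -> forall ex : nat -> A,
     eval (assign ex (fun _ => z0 A)) t = z0 A) -> ideal_term E zero t.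
Proof.
move=> H A HA e; rewrite eval_subst eval_z0 -(H A HA e); f_equal.
apply: functional_extensionality => -[j|j] /=; first by []. by rewrite eval_z0.
Qed.

Lemma ideal_term_eval t : ideal_term E zero t ->
  forall A : algebra S, in_variety E A -> forall ex : nat -> A,
     eval (assign ex (fun _ => z0 A)) t = z0 A.
Proof.
move=> Ht A HA ex; have := Ht A HA ex; rewrite eval_subst => HH.
transitivity (eval ex (cst nat zero)); last exact: eval_z0.
rewrite -HH; f_equal.
apply: functional_extensionality => -[j|j] /=; first by []. by rewrite eval_z0.
Qed.

Definition Q (A : algebra S) (H : A -> Prop) (a b : A) := forall i, H (al i a b).

Lemma core (A : algebra S) (HA : in_variety E A) (H : A -> Prop)
  (H0 : H (z0 A))
  (Ha : forall b i, H b -> H (al i b (z0 A)))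
  (Ht : forall h, (forall l, H (h l)) -> H (th h (z0 A)))
  (Hs : forall f (u v : 'I_(arity f) -> A), (forall j, Q H (u j) (v j)) ->
          Q H (@interp S A f u) (@interp S A f v)) :
  forall t, ideal_term E zero t -> closed_under H t.
Proof.
have key : forall t ex ey, (forall j, H (ey j)) ->
   Q H (eval (assign ex ey) t) (eval (assign ex (fun _ => z0 A)) t).
  move=> t ex ey Hey; elim: t => [[j|j]|f args IH] /=.
  - by move=> i; rewrite al_xx.
  - by move=> i; apply: Ha.
  - exact: Hs.
move=> t Hid ex ey Hey.
have := key t ex ey Hey; rewrite (ideal_term_eval Hid HA) => HQ.
rewrite -(th_al HA (eval (assign ex ey) t) (z0 A)). exact: Ht.
Qed.

Definition ext (T : Type) k (h : 'I_k -> T) (d : T) (p : nat) : T := oapp h d (insub p).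
Lemma extE T k h d (j : 'I_k) : @ext T k h d (val j) = h j.
Proof. by rewrite /ext valK. Qed.
Lemma extP T k (P : T -> Prop) h d : (forall j, P (h j)) -> P d -> forall p, P (@ext T k h d p).
Proof. move=> Hh Hd p; rewrite /ext; by case: insub. Qed.
Lemma extN T k h d p : k <= p -> @ext T k h d p = d.
Proof. move=> Hp; by rewrite /ext insubF // ltnNge Hp. Qed.


Lemma eval_Tt (A : algebra S) k (tau : term S 'I_k) i (ex ey : nat -> A) :
  eval (assign ex ey) (Tt alpha theta tau i) =
  al i (eval (fun j : 'I_k => th (fun l => ey (val j * n + val l)) (ex (val j))) tau)
       (eval (fun j : 'I_k => ex (val j)) tau).
Proof.
rewrite /Tt eval_al !eval_subst; f_equal; f_equal.
apply: functional_extensionality => j; by rewrite eval_th.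
Qed.

Lemma eval_St (A : algebra S) k (tau : term S 'I_k) i j (ex ey : nat -> A) :
  eval (assign ex ey) (St alpha theta tau i j) =
  al i (eval (fun m : 'I_k => if m == j then th (fun l => ey (val l)) (ex (val m)) else ex (val m)) tau)
       (eval (fun m : 'I_k => ex (val m)) tau).
Proof.
rewrite /St eval_al !eval_subst; f_equal; f_equal.
apply: functional_extensionality => m; case: (m == j) => //; by rewrite eval_th.
Qed.

Lemma eval_Rt (A : algebra S) i (ex ey : nat -> A) :
  eval (assign ex ey) (Rt alpha theta i) =
  al i (th (fun l => ey (val l)) (ex 0)) (th (fun l => ey (n + val l)) (ex 0)).
Proof. by rewrite /Rt eval_al !eval_th. Qed.

Lemma eval_theta_y (A : algebra S) (ex ey : nat -> A) :
  eval (assign ex ey) (theta_y theta) = th (fun l => ey (val l)) (ey n).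
Proof. by rewrite /theta_y eval_th. Qed.

Lemma id_Tt k (tau : term S 'I_k) i : ideal_term E zero (Tt alpha theta tau i).
Proof.
apply: ideal_termP => A HA ex; rewrite eval_Tt.
have -> : (fun j : 'I_k => th (fun l => (fun _ : nat => z0 A) (val j * n + val l)) (ex (val j)))
   = (fun j : 'I_k => ex (val j)).
  by apply: functional_extensionality => j; apply: th0.
exact: al_xx.
Qed.

Lemma id_St k (tau : term S 'I_k) i j : ideal_term E zero (St alpha theta tau i j).
Proof.
apply: ideal_termP => A HA ex; rewrite eval_St.
have -> : (fun m : 'I_k => if m == j then th (fun l => (fun _ : nat => z0 A) (val l)) (ex (val m)) else ex (val m))
   = (fun m : 'I_k => ex (val m)).
  by apply: functional_extensionality => m; case: (m == j) => //; apply: th0.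
exact: al_xx.
Qed.

Lemma id_Rt i : ideal_term E zero (Rt alpha theta i).
Proof. apply: ideal_termP => A HA ex; rewrite eval_Rt !th0 //; exact: al_xx. Qed.

Lemma id_theta_y : ideal_term E zero (theta_y theta).
Proof. apply: ideal_termP => A HA ex; rewrite eval_theta_y th0 //. Qed.

Lemma id_alpha_yy i : ideal_term E zero (alpha_yy alpha i).
Proof. apply: ideal_termP => A HA ex; rewrite /alpha_yy eval_al; exact: al_xx. Qed.

Lemma id_alpha_y0 i : ideal_term E zero (alpha_y0 zero alpha i).
Proof. apply: ideal_termP => A HA ex; rewrite /alpha_y0 eval_al eval_z0; exact: al_xx. Qed.

Lemma id_zero_t : ideal_term E zero (zero_t zero).
Proof. apply: ideal_termP => A HA ex; exact: eval_z0. Qed.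

Lemma id_op_y (SA : semi_abelian E zero alpha theta) f : ideal_term E zero (op_y f).
Proof.
apply: ideal_termP => A HA ex.
case: SA => _ Hc.
exact: (Hc (App f (fun _ => zero)) A HA (fun v : void => match v with end)).
Qed.

Lemma det_of (T : iterm S -> Prop) :
  (forall t, T t -> ideal_term E zero t) ->
  (forall A : algebra S, in_variety E A -> forall H : A -> Prop, (exists a, H a) ->
     (forall t, T t -> closed_under H t) ->
     [/\ H (z0 A), (forall b i, H b -> H (al i b (z0 A))),
         (forall h, (forall l, H (h l)) -> H (th h (z0 A))) &
         (forall f (u v : 'I_(arity f) -> A), (forall j, Q H (u j) (v j)) ->
            Q H (@interp S A f u) (@interp S A f v))]) ->
  determines_ideals E zero T.
Proof.
move=> HT Hc; split => // A HA H Hne; split.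
- by case=> _ Hid t Tt; apply: Hid; apply: HT.
- move=> Hcl; split => //; case: (Hc A HA H Hne Hcl) => H0 Ha Ht Hs; exact: core.
Qed.

Section Clos.
Variable A : algebra S.
Hypothesis HA : in_variety E A.
Variable H : A -> Prop.

Lemma n_gt0 : 0 < n. Proof. by case: HB. Qed.

Lemma Ht_of : H (z0 A) -> closed_under H (theta_y theta) ->
  forall h, (forall l, H (h l)) -> H (th h (z0 A)).
Proof.
move=> H0 Hc h Hh.
have := Hc (fun _ => z0 A) (ext h (z0 A)) (extP Hh H0).
rewrite eval_theta_y extN //.
have -> : (fun l : 'I_n => ext h (z0 A) (val l)) = h.
  by apply: functional_extensionality => l; rewrite extE.
by [].
Qed.

Lemma Ha_of : H (z0 A) -> (forall i, closed_under H (alpha_y0 zero alpha i)) ->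
  forall b i, H b -> H (al i b (z0 A)).
Proof.
move=> H0 Hc b i Hb.
have := Hc i (fun _ => z0 A) (fun _ => b) (fun _ => Hb).
by rewrite /alpha_y0 eval_al eval_z0.
Qed.

Lemma Ha_of_yy : H (z0 A) -> (forall i, closed_under H (alpha_yy alpha i)) ->
  forall b i, H b -> H (al i b (z0 A)).
Proof.
move=> H0 Hc b i Hb.
have := Hc i (fun _ => z0 A) (fun p => if p == 0 then b else z0 A).
rewrite /alpha_yy eval_al /=; apply => p; by case: (p == 0).
Qed.

Lemma H0_of_yy : (exists a, H a) -> (forall i, closed_under H (alpha_yy alpha i)) -> H (z0 A).
Proof.
move=> [a Ha] Hc.
have := Hc (Ordinal n_gt0) (fun _ => z0 A) (fun _ => a) (fun _ => Ha).
by rewrite /alpha_yy eval_al al_xx.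
Qed.

Lemma H0_of_zero : (exists a, H a) -> closed_under H (zero_t zero) -> H (z0 A).
Proof.
move=> [a Ha] Hc.
have := Hc (fun _ => z0 A) (fun _ => a) (fun _ => Ha).
by rewrite /zero_t eval_z0.
Qed.

Lemma H0_of_R : (exists a, H a) -> (forall i, closed_under H (Rt alpha theta i)) -> H (z0 A).
Proof.
move=> [a Ha] Hc.
have := Hc (Ordinal n_gt0) (fun _ => a) (fun _ => a) (fun _ => Ha).
by rewrite eval_Rt al_xx.
Qed.

Lemma step_T : H (z0 A) -> (forall f i, closed_under H (Tt alpha theta (opterm f) i)) ->
  forall f (u v : 'I_(arity f) -> A), (forall j, Q H (u j) (v j)) ->
     Q H (@interp S A f u) (@interp S A f v).
Proof.
move=> H0 Hc f u v Huv i.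
pose ex := ext v (z0 A).
pose ey := fun p => ext (fun j => ext (fun l => al l (u j) (v j)) (z0 A) (p %% n)) (z0 A) (p %/ n).
have Hey : forall p, H (ey p).
  move=> p; apply: extP => // j; apply: extP => // l; exact: Huv.
have Hey' : forall (j : 'I_(arity f)) (l : 'I_n), ey (val j * n + val l) = al l (u j) (v j).
  move=> j l; rewrite /ey.
  have -> : (val j * n + val l) %/ n = val j by rewrite divnMDl ?n_gt0 // (divn_small (ltn_ord l)) addn0.
  have -> : (val j * n + val l) %% n = val l by rewrite modnMDl (modn_small (ltn_ord l)).
  by rewrite !extE.
have := Hc f i ex ey Hey; rewrite eval_Tt /=.
have -> : (fun j : 'I_(arity f) => th (fun l => ey (val j * n + val l)) (ex (val j))) = u.
  apply: functional_extensionality => j.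
  have -> : (fun l : 'I_n => ey (val j * n + val l)) = (fun l => al l (u j) (v j)).
    by apply: functional_extensionality => l; exact: Hey'.
  by rewrite /ex extE th_al.
have -> : (fun j : 'I_(arity f) => ex (val j)) = v.
  by apply: functional_extensionality => j; rewrite /ex extE.
by [].
Qed.

Section R.
Hypothesis H0 : H (z0 A).
Hypothesis HR : forall i, closed_under H (Rt alpha theta i).

Lemma R_sem (h1 h2 : 'I_n -> A) x : (forall l, H (h1 l)) -> (forall l, H (h2 l)) ->
  forall i, H (al i (th h1 x) (th h2 x)).
Proof.
move=> Hh1 Hh2 i.
pose ey := fun p => if p < n then ext h1 (z0 A) p else ext h2 (z0 A) (p - n).
have Hey : forall p, H (ey p).
  by move=> p; rewrite /ey; case: (p < n); apply: extP.
have := @HR i (fun _ => x) ey Hey; rewrite eval_Rt.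
have -> : (fun l : 'I_n => ey (val l)) = h1.
  by apply: functional_extensionality => l; rewrite /ey ltn_ord extE.
have -> : (fun l : 'I_n => ey (n + val l)) = h2.
  apply: functional_extensionality => l.
  by rewrite /ey ltnNge leq_addr /= addKn extE.
by [].
Qed.

Lemma Q_refl a : Q H a a.
Proof. by move=> i; rewrite al_xx. Qed.

Lemma Q_eucl a b c : Q H a b -> Q H c b -> Q H a c.
Proof.
move=> Hab Hcb i.
rewrite -(th_al HA a b) -(th_al HA c b).
exact: R_sem.
Qed.

Lemma Q_sym a b : Q H a b -> Q H b a.
Proof. move=> Hab; apply: (Q_eucl (Q_refl b) Hab). Qed.

Lemma Q_trans a b c : Q H a b -> Q H b c -> Q H a c.
Proof. move=> Hab Hbc; apply: (Q_eucl Hab (Q_sym Hbc)). Qed.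

Lemma step_S : (forall f i j, closed_under H (St alpha theta (opterm f) i j)) ->
  forall f (u v : 'I_(arity f) -> A), (forall j, Q H (u j) (v j)) ->
     Q H (@interp S A f u) (@interp S A f v).
Proof.
move=> Hc f u v Huv.
pose w m := @interp S A f (fun p : 'I_(arity f) => if val p < m then u p else v p).
have Hstep : forall m (Hm : m < arity f), Q H (w m.+1) (w m).
  move=> m Hm i.
  pose j := Ordinal Hm.
  pose ex := ext (fun p : 'I_(arity f) => if val p < m then u p else v p) (z0 A).
  pose ey := ext (fun l => al l (u j) (v j)) (z0 A).
  have Hey : forall p, H (ey p) by apply: extP => // l; exact: Huv.
  have := Hc f i j ex ey Hey; rewrite eval_St.
  have -> : (fun p : 'I_(arity f) => if p == j then th (fun l => ey (val l)) (ex (val p)) else ex (val p))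
      = (fun p : 'I_(arity f) => if val p < m.+1 then u p else v p).
    apply: functional_extensionality => p; rewrite /ex extE.
    case: eqVneq => [->|Hpj].
    + have -> : (fun l : 'I_n => ey (val l)) = (fun l => al l (u j) (v j)).
        by apply: functional_extensionality => l; rewrite /ey extE.
      by rewrite /= ltnn ltnS leqnn th_al.
    + have Hpm : (nat_of_ord p == m) = false.
        by apply/negbTE; move: Hpj; apply: contra => /eqP Hp; apply/eqP; apply: val_inj; exact: Hp.
      by rewrite (ltnS (val p) m) (leq_eqVlt (val p) m) Hpm.
  have -> : (fun p : 'I_(arity f) => ex (val p))
      = (fun p : 'I_(arity f) => if val p < m then u p else v p).
    by apply: functional_extensionality => p; rewrite /ex extE.
  by [].
have Hall : forall m, m <= arity f -> Q H (w m) (w 0).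
  elim=> [|m IH] Hm; first exact: Q_refl.
  apply: (Q_trans (Hstep m Hm)); apply: IH; exact: ltnW.
have := Hall _ (leqnn (arity f)).
have -> : w (arity f) = @interp S A f u.
  by rewrite /w; f_equal; apply: functional_extensionality => p; rewrite ltn_ord.
have -> : w 0 = @interp S A f v.
  by rewrite /w; f_equal; apply: functional_extensionality => p; rewrite ltn0.
by [].
Qed.
End R.

Lemma subalg : (exists a, H a) -> (forall f, closed_under H (op_y f)) ->
  forall X (t : term S X) (e : X -> A), (forall x, H (e x)) -> H (eval e t).
Proof.
move=> [a Ha] Hc X t e He; elim: t => [x|f args IH] /=; first exact: He.
have := Hc f (fun _ => a) (ext (fun j => eval e (args j)) a) (extP IH Ha).
rewrite /op_y /=.
have -> : (fun i : 'I_(arity f) => ext (fun j => eval e (args j)) a (val i)) = (fun j => eval e (args j)).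
  by apply: functional_extensionality => j; rewrite extE.
by [].
Qed.

Lemma base_sa_ok : (exists a, H a) -> (forall f, closed_under H (op_y f)) ->
  [/\ H (z0 A), (forall b i, H b -> H (al i b (z0 A))) &
      (forall h, (forall l, H (h l)) -> H (th h (z0 A)))].
Proof.
move=> Hne Hc.
have H0 : H (z0 A) by apply: (subalg Hne Hc); case.
split => //.
- move=> b i Hb; apply: (subalg Hne Hc) => j; by case: (val j == 0).
- move=> h Hh; apply: (subalg Hne Hc) => j; by case: (unlift ord_max j).
Qed.

End Clos.

End Proof.

Theorem theorem2p6 (S : signature) (E : identities S) (n : nat)
    (zero : term S void) (alpha : 'I_n -> term S 'I_2) (theta : term S 'I_n.+1) :
  BIT_speciale E zero alpha theta ->
  (determines_ideals E zero (Tset_i alpha theta) /\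
   determines_ideals E zero (Tset_ii zero alpha theta) /\
   determines_ideals E zero (Tset_iii zero alpha theta) /\
   determines_ideals E zero (Tset_iv zero alpha theta)) /\
  (semi_abelian E zero alpha theta ->
   determines_ideals E zero (Tset_i_sa alpha theta) /\
   determines_ideals E zero (Tset_ii_sa alpha theta) /\
   determines_ideals E zero (Tset_iii_sa alpha theta) /\
   determines_ideals E zero (Tset_iv_sa alpha theta)).
Proof.
move=> HB; split; [split; [|split; [|split]] | move=> SA; split; [|split; [|split]]].
- apply: (@det_of S E n zero alpha theta HB).
  + move=> t [[->|[i ->]]|[[f [i ->]]|[i ->]]].
    * eapply id_theta_y; eauto.
    * eapply id_alpha_yy; eauto.
    * eapply id_Tt; eauto.
    * eapply id_Tt; eauto.
  + move=> A HA H Hne Hcl.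
    have cyy : forall i, closed_under H (alpha_yy alpha i) by move=> i; apply: Hcl; left; right; exists i.
    have cth : closed_under H (theta_y theta) by apply: Hcl; left; left.
    have cT : forall f i, closed_under H (Tt alpha theta (opterm f) i) by move=> f i; apply: Hcl; right; left; exists f, i.
    have H0 : H (z0 zero A) by eapply H0_of_yy; eauto.
    split; [exact H0 | eapply Ha_of_yy; eauto | eapply Ht_of; eauto | eapply step_T; eauto].
- apply: (@det_of S E n zero alpha theta HB).
  + move=> t [[->|[->|[i ->]]]|[[f [i ->]]|[[i ->]|[i [j ->]]]]].
    * eapply id_zero_t; eauto.
    * eapply id_theta_y; eauto.
    * eapply id_alpha_y0; eauto.
    * eapply id_Tt; eauto.
    * eapply id_Tt; eauto.
    * eapply id_Tt; eauto.
  + move=> A HA H Hne Hcl.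
    have c0 : closed_under H (zero_t zero) by apply: Hcl; left; left.
    have cy0 : forall i, closed_under H (alpha_y0 zero alpha i) by move=> i; apply: Hcl; left; right; right; exists i.
    have cth : closed_under H (theta_y theta) by apply: Hcl; left; right; left.
    have cT : forall f i, closed_under H (Tt alpha theta (opterm f) i) by move=> f i; apply: Hcl; right; left; exists f, i.
    have H0 : H (z0 zero A) by eapply H0_of_zero; eauto.
    split; [exact H0 | eapply Ha_of; eauto | eapply Ht_of; eauto | eapply step_T; eauto].
- apply: (@det_of S E n zero alpha theta HB).
  + move=> t [[->|[i ->]]|[[f [i ->]]|[i ->]]].
    * eapply id_theta_y; eauto.
    * eapply id_alpha_y0; eauto.
    * eapply id_Tt; eauto.
    * eapply id_Rt; eauto.
  + move=> A HA H Hne Hcl.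
    have cy0 : forall i, closed_under H (alpha_y0 zero alpha i) by move=> i; apply: Hcl; left; right; exists i.
    have cth : closed_under H (theta_y theta) by apply: Hcl; left; left.
    have cT : forall f i, closed_under H (Tt alpha theta (opterm f) i) by move=> f i; apply: Hcl; right; left; exists f, i.
    have cR : forall i, closed_under H (Rt alpha theta i) by move=> i; apply: Hcl; right; right; exists i.
    have H0 : H (z0 zero A) by eapply H0_of_R; eauto.
    split; [exact H0 | eapply Ha_of; eauto | eapply Ht_of; eauto | eapply step_T; eauto].
- apply: (@det_of S E n zero alpha theta HB).
  + move=> t [[->|[i ->]]|[[f [i [j ->]]]|[i ->]]].
    * eapply id_theta_y; eauto.
    * eapply id_alpha_y0; eauto.
    * eapply id_St; eauto.
    * eapply id_Rt; eauto.
  + move=> A HA H Hne Hcl.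
    have cy0 : forall i, closed_under H (alpha_y0 zero alpha i) by move=> i; apply: Hcl; left; right; exists i.
    have cth : closed_under H (theta_y theta) by apply: Hcl; left; left.
    have cS : forall f i j, closed_under H (St alpha theta (opterm f) i j) by move=> f i j; apply: Hcl; right; left; exists f, i, j.
    have cR : forall i, closed_under H (Rt alpha theta i) by move=> i; apply: Hcl; right; right; exists i.
    have H0 : H (z0 zero A) by eapply H0_of_R; eauto.
    split; [exact H0 | eapply Ha_of; eauto | eapply Ht_of; eauto | eapply step_S; eauto].
- apply: (@det_of S E n zero alpha theta HB).
  + move=> t [[f ->]|[[f [i ->]]|[i ->]]].
    * eapply id_op_y; eauto.
    * eapply id_Tt; eauto.
    * eapply id_Tt; eauto.
  + move=> A HA H Hne Hcl.
    have cop : forall f, closed_under H (op_y f) by move=> f; apply: Hcl; left; exists f.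
    have cT : forall f i, closed_under H (Tt alpha theta (opterm f) i) by move=> f i; apply: Hcl; right; left; exists f, i.
    have [H0 Ha Ht] := base_sa_ok zero alpha theta Hne cop.
    split => //; eapply step_T; eauto.
- apply: (@det_of S E n zero alpha theta HB).
  + move=> t [[f ->]|[[f [i ->]]|[[i ->]|[i [j ->]]]]].
    * eapply id_op_y; eauto.
    * eapply id_Tt; eauto.
    * eapply id_Tt; eauto.
    * eapply id_Tt; eauto.
  + move=> A HA H Hne Hcl.
    have cop : forall f, closed_under H (op_y f) by move=> f; apply: Hcl; left; exists f.
    have cT : forall f i, closed_under H (Tt alpha theta (opterm f) i) by move=> f i; apply: Hcl; right; left; exists f, i.
    have [H0 Ha Ht] := base_sa_ok zero alpha theta Hne cop.
    split => //; eapply step_T; eauto.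
- apply: (@det_of S E n zero alpha theta HB).
  + move=> t [[f ->]|[[f [i ->]]|[i ->]]].
    * eapply id_op_y; eauto.
    * eapply id_Tt; eauto.
    * eapply id_Rt; eauto.
  + move=> A HA H Hne Hcl.
    have cop : forall f, closed_under H (op_y f) by move=> f; apply: Hcl; left; exists f.
    have cT : forall f i, closed_under H (Tt alpha theta (opterm f) i) by move=> f i; apply: Hcl; right; left; exists f, i.
    have [H0 Ha Ht] := base_sa_ok zero alpha theta Hne cop.
    split => //; eapply step_T; eauto.
- apply: (@det_of S E n zero alpha theta HB).
  + move=> t [[f ->]|[[f [i [j ->]]]|[i ->]]].
    * eapply id_op_y; eauto.
    * eapply id_St; eauto.
    * eapply id_Rt; eauto.
  + move=> A HA H Hne Hcl.
    have cop : forall f, closed_under H (op_y f) by move=> f; apply: Hcl; left; exists f.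
    have cS : forall f i j, closed_under H (St alpha theta (opterm f) i j) by move=> f i j; apply: Hcl; right; left; exists f, i, j.
    have cR : forall i, closed_under H (Rt alpha theta i) by move=> i; apply: Hcl; right; right; exists i.
    have [H0 Ha Ht] := base_sa_ok zero alpha theta Hne cop.
    split => //; eapply step_S; eauto.
Qed.
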